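(* Let $\pi:L_{\mathcal F}\to L_{\mathcal G}$ satisfy (REG). For each $X\in L_{\mathcal F}$ and $Q\in L^*_{\mathcal F}\cap\mathcal P$, \[\inf_\Gamma K^\Gamma(X,Q)=K(X,Q),\] where the infimum is taken over all finite partitions $\Gamma$ of $\Omega$ into $\mathcal G$-measurable sets.
   Context: Let $(\Omega,\mathcal F,\mathbb P)$ be a probability space and $\mathcal G\subseteq\mathcal F$ a sub-$\sigma$-algebra. (In)equalities hold $\mathbb P$-a.s. unless a measure is indicated ($\ge_Q$: $Q$-a.s.); $\inf$ is the $\mathbb P$-essential infimum. $L_{\mathcal F}\subseteq L^0(\Omega,\mathcal F,\mathbb P)$, $L_{\mathcal G}\subseteq L^0(\Omega,\mathcal G,\mathbb P)$ are vector lattices closed under multiplication by indicators of $\mathcal F$- (resp. $\mathcal G$-) measurable sets; the order continuous dual $L^*_{\mathcal F}$ of $(L_{\mathcal F},\ge)$ is a lattice contained in $L^1(\Omega,\mathcal F,\mathbb P)$ (functionals $X\mapsto E_{\mathbb P}[ZX]$), closed under multiplication by indicators of sets in $\mathcal F$. $\mathcal P$ = densities of probabilities $Q\ll\mathbb P$. (REG): $\pi(X\mathbf 1_A+Y\mathbf 1_{A^c})=\pi(X)\mathbf 1_A+\pi(Y)\mathbf 1_{A^c}$ for $A\in\mathcal G$. $K(X,Q):=\inf_{\xi\in L_{\mathcal F}}\{\pi(\xi)\mid E_Q[\xi\mid\mathcal G]\ge_Q E_Q[X\mid\mathcal G]\}$. For $A\in\mathcal G$, $\pi_A(X):=\operatorname{ess\,sup}_{\omega\in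 A}\pi(X)(\omega)$; for a finite $\mathcal G$-measurable partition $\Gamma$, $\pi^\Gamma(X):=\sum_{A\in\Gamma}\pi_A(X)\mathbf 1_A$ and $K^\Gamma(X,Q):=\inf_{\xi\in L_{\mathcal F}}\{\pi^\Gamma(\xi)\mid E_Q[\xi\mid\mathcal G]\ge_Q E_Q[X\mid\mathcal G]\}$. *)

(* Defs.v *)
From HB Require Import structures.
From mathcomp Require Import all_boot all_order all_algebra.
From mathcomp Require Import all_classical all_reals all_analysis measurable_realfun.

Set Implicit Arguments.
Unset Strict Implicit.
Unset Printing Implicit Defensive.

Import Order.TTheory GRing.Theory Num.Theory.
Import numFieldNormedType.Exports.

Local Open Scope classical_set_scope.
Local Open Scope ring_scope.

Section Defs.
Context d (T : measurableType d) (R : realType) (P : probability T R).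

Definition meas_wrt (M : set (set T)) (f : T -> R) :=
  forall B : set R, measurable B -> M (f @^-1` B).

Definition is_sub_sigma_algebra (G : set (set T)) :=
  sigma_algebra setT G /\ G `<=` measurable.

(** [L] (a set of M-measurable functions, saturated under P-a.s. equality
    among M-measurable functions, i.e. a set of classes of L^0(Omega,M,P))
    is a vector lattice closed under multiplication by indicators of sets
    in [M]. *)
Definition ind_vector_lattice (M : set (set T)) (L : set (T -> R)) :=
  (forall X, L X -> meas_wrt M X) /\
  (forall X Y, L X -> meas_wrt M Y -> {ae P, forall x, X x = Y x} -> L Y) /\
  L (fun _ => 0) /\
  (forall X Y, L X -> L Y -> L (fun x => X x + Y x)) /\
  (forall (a : R) X, L X -> L (fun x => a * X x)) /\
  (forall X Y, L X -> L Y -> L (fun x => Num.max (X x) (Y x))) /\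
  (forall A X, M A -> L X -> L (fun x => \1_A x * X x)).

(** [Z] is the density dQ/dP of a probability measure Q << P. *)
Definition is_density (Z : T -> R) :=
  [/\ measurable_fun setT Z, {ae P, forall x, 0 <= Z x} &
      (\int[P]_x (Z x)%:E = 1)%E].

(** [Z] belongs to (the L^1 representation of) the order continuous dual of
    (L_F, >=): the functional X |-> E_P[Z X] is well defined on L_F and
    order continuous (for every downward directed D in L_F with
    infimum 0 in L_F, the net (E_P[Z X])_{X in D} converges to 0). *)
Definition oc_dual (LF : set (T -> R)) (Z : T -> R) :=
  [/\ P.-integrable setT (fun x => (Z x)%:E),
      (forall X, LF X -> P.-integrable setT (fun x => (Z x * X x)%:E)) &
      (forall D : set (T -> R), D `<=` LF -> D !=set0 ->
        (forall X Y, D X -> D Y -> exists2 W, D W &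
           {ae P, forall x, W x <= X x /\ W x <= Y x}) ->
        (forall X, D X -> {ae P, forall x, 0 <= X x}) ->
        (forall h, LF h -> (forall X, D X -> {ae P, forall x, h x <= X x}) ->
           {ae P, forall x, h x <= 0}) ->
        forall eps : R, 0 < eps -> exists2 X0, D X0 &
          forall X, D X -> {ae P, forall x, X x <= X0 x} ->
            (`| \int[P]_x (Z x * X x)%:E | < eps%:E)%E)].

(** Q-almost surely, where Z = dQ/dP. *)
Definition Qae (Z : T -> R) (p : T -> Prop) := {ae P, forall x, 0 < Z x -> p x}.

(** [Y] is a version of E_Q[xi | G], Z = dQ/dP. *)
Definition cond_exp_version (G : set (set T)) (Z xi Y : T -> R) :=
  [/\ meas_wrt G Y,
      P.-integrable setT (fun x => (Y x * Z x)%:E) &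
      forall A, G A ->
        (\int[P]_(x in A) (Y x * Z x)%:E = \int[P]_(x in A) (xi x * Z x)%:E)%E].

Definition cond_exp_ge (G : set (set T)) (Z xi X : T -> R) :=
  exists Yxi YX, [/\ cond_exp_version G Z xi Yxi, cond_exp_version G Z X YX &
                     Qae Z (fun x => YX x <= Yxi x)].

Definition is_essinf (S : set (T -> \bar R)) (Y : T -> \bar R) :=
  [/\ measurable_fun setT Y,
      (forall f, S f -> {ae P, forall x, (Y x <= f x)%E}) &
      (forall Y', measurable_fun setT Y' ->
         (forall f, S f -> {ae P, forall x, (Y' x <= f x)%E}) ->
         {ae P, forall x, (Y' x <= Y x)%E})].

Definition esssup_on (A : set T) (f : T -> \bar R) : \bar R :=
  ereal_inf [set c : \bar R | {ae P, forall x, A x -> (f x <= c)%E}].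

Definition G_partition (G : set (set T)) (Gam : seq (set T)) :=
  [/\ forall i, (i < size Gam)%N -> G (nth set0 Gam i),
      forall i j, (i < size Gam)%N -> (j < size Gam)%N -> i != j ->
        nth set0 Gam i `&` nth set0 Gam j = set0 &
      forall x, exists2 i, (i < size Gam)%N & nth set0 Gam i x].

Definition pi_Gamma (pi : (T -> R) -> T -> R) (Gam : seq (set T)) (xi : T -> R)
  : T -> \bar R :=
  fun x => (\sum_(A <- Gam) esssup_on A (fun y => (pi xi y)%:E) * (\1_A x)%:E)%E.

Definition K_family (G : set (set T)) (LF : set (T -> R))
  (pi : (T -> R) -> T -> R) (X Z : T -> R) : set (T -> \bar R) :=
  [set f | exists2 xi, LF xi /\ cond_exp_ge G Z xi X &
                       f = (fun x => (pi xi x)%:E)].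

Definition KGamma_family (G : set (set T)) (LF : set (T -> R))
  (pi : (T -> R) -> T -> R) (Gam : seq (set T)) (X Z : T -> R)
  : set (T -> \bar R) :=
  [set f | exists2 xi, LF xi /\ cond_exp_ge G Z xi X & f = pi_Gamma pi Gam xi].

End Defs.

(* Main.v *)
Require Import Defs.
From HB Require Import structures.
From mathcomp Require Import all_boot all_order all_algebra.
From mathcomp Require Import all_classical all_reals all_analysis measurable_realfun.
Import Order.TTheory GRing.Theory Num.Theory.
Local Open Scope classical_set_scope.
Local Open Scope ring_scope.

Section H.
Context (d : measure_display) (T : measurableType d) (R : realType) (P : probability T R).

Lemma ae_rat (Q : rat -> T -> Prop) :
  (forall q, {ae P, forall x, Q q x}) -> {ae P, forall x, forall q, Q q x}.
Proof.
move=> H.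
have HH : {ae P, forall x, forall n, match unpickle n with Some q => Q q x | None => True end}.
  apply: ae_foralln => n; case: (unpickle n) => [q|]; first exact: H.
  exact: (@aeW _ _ _ P (fun _ => True) (fun=> I)).
apply: filterS HH => x Hn q.
by have := Hn (pickle q); rewrite pickleK.
Qed.

Lemma dens1 (s : \bar R) (a : R) : (s < a%:E)%E ->
  exists q : rat, (s < (ratr q)%:E)%E /\ ratr q < a.
Proof.
case: s => [r| |] //.
  rewrite lte_fin => ra; have [q] := rat_in_itvoo ra.
  by rewrite in_itv /= => /andP[h1 h2]; exists q; rewrite lte_fin.
move=> _; have : a - 1 < a by rewrite ltrBlDr ltrDl.
move=> ra; have [q] := rat_in_itvoo ra.
by rewrite in_itv /= => /andP[h1 h2]; exists q; split => //; exact: ltNyr.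
Qed.

Lemma dens2 (a : R) (s : \bar R) : (a%:E < s)%E ->
  exists q : rat, a < ratr q /\ ((ratr q)%:E < s)%E.
Proof.
case: s => [r| |] //.
  rewrite lte_fin => ra; have [q] := rat_in_itvoo ra.
  by rewrite in_itv /= => /andP[h1 h2]; exists q; rewrite lte_fin.
move=> _; have : a < a + 1 by rewrite ltrDl.
move=> ra; have [q] := rat_in_itvoo ra.
by rewrite in_itv /= => /andP[h1 h2]; exists q; split => //; exact: ltry.
Qed.

Lemma esssup_ge (A : set T) (f : T -> R) :
  {ae P, forall x, A x -> ((f x)%:E <= esssup_on P A (fun y => (f y)%:E))%E}.
Proof.
set s := esssup_on P A _.
have HH : {ae P, forall x, forall q, (s < (ratr q)%:E)%E -> A x -> f x <= ratr q}.
  apply: ae_rat => q; have [sq|nsq] := pselect (s < (ratr q)%:E)%E; last first.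
    by apply: (@aeW _ _ _ P (fun x => (s < (ratr q)%:E)%E -> A x -> f x <= ratr q)) => x h; rewrite h in nsq.
  have [c Sc cq] := ereal_inf_lt sq.
  apply: filterS Sc => x h _ Ax.
  by rewrite -lee_fin; apply: le_trans (ltW cq); exact: h.
apply: filterS HH => x Hn Ax.
rewrite leNgt; apply/negP => /dens1[q [sq qa]].
by have := Hn q sq Ax; rewrite leNgt qa.
Qed.

End H.
Section H2.
Context (d : measure_display) (T : measurableType d) (R : realType) (P : probability T R).

Lemma sum_on (G : set (set T)) (Gam : seq (set T)) (g : set T -> \bar R) (x : T) (i : nat) :
  G_partition G Gam -> (i < size Gam)%N -> nth set0 Gam i x ->
  (\sum_(A <- Gam) g A * (\1_A x)%:E)%E = g (nth set0 Gam i).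
Proof.
move=> [_ disj _] Hi Hx.
rewrite (big_nth set0) big_mkord (bigD1 (Ordinal Hi)) //=.
rewrite big1 ?adde0.
  by rewrite indicE mem_set // mule1.
move=> j /eqP Hj; rewrite indicE memNset ?mule0 // => Hjx.
have : (nth set0 Gam j `&` nth set0 Gam i) x by [].
rewrite disj //; apply/negP => /eqP h; apply: Hj; exact: val_inj.
Qed.

Lemma sum_ge (G : set (set T)) (Gam : seq (set T)) (f : T -> R) :
  G_partition G Gam ->
  {ae P, forall x, ((f x)%:E <=
    \sum_(A <- Gam) esssup_on P A (fun y => (f y)%:E) * (\1_A x)%:E)%E}.
Proof.
move=> Hp.
have HH : {ae P, forall x, forall i, nth set0 Gam i x ->
    ((f x)%:E <= esssup_on P (nth set0 Gam i) (fun y => (f y)%:E))%E}.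
  by apply: ae_foralln => i; exact: esssup_ge.
apply: filterS HH => x Hx.
have [_ _ cov] := Hp; have [i Hi Hix] := cov x.
by rewrite (@sum_on G Gam _ x i Hp Hi Hix); exact: Hx.
Qed.

End H2.

Theorem lemma26 (d : measure_display) (T : measurableType d) (R : realType)
  (P : probability T R) (G : set (set T)) (LF LG : set (T -> R))
  (pi : (T -> R) -> T -> R) :
  is_sub_sigma_algebra G ->
  ind_vector_lattice P measurable LF ->
  ind_vector_lattice P G LG ->
  (forall X, LF X -> LG (pi X)) ->
  (* pi is well defined on P-a.s. equivalence classes *)
  (forall X Y, LF X -> LF Y -> {ae P, forall x, X x = Y x} ->
     {ae P, forall x, pi X x = pi Y x}) ->
  (* (REG) *)
  (forall A X Y, G A -> LF X -> LF Y ->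
     {ae P, forall x,
        pi (fun y => X y * \1_A y + Y y * \1_(~` A) y) x
        = pi X x * \1_A x + pi Y x * \1_(~` A) x}) ->
  forall (X Z : T -> R), LF X -> oc_dual P LF Z -> is_density P Z ->
  forall (KG : seq (set T) -> T -> \bar R),
    (forall Gam, G_partition G Gam ->
       is_essinf P (KGamma_family P G LF pi Gam X Z) (KG Gam)) ->
  forall K : T -> \bar R,
    is_essinf P (K_family P G LF pi X Z) K ->
    is_essinf P [set KG Gam | Gam in G_partition G] K.
Proof.
move=> hG hLF hLG piLG piwd REG X Z HX hoc hdens KG hKG K [mK Klb Kmax].
split => //.
- move=> f [Gam Hp <-]; have [mKG KGlb KGmax] := hKG Gam Hp.
  apply: KGmax => // g [xi [LFxi cxi] ->].
  have h1 := Klb (fun x => (pi xi x)%:E) (ex_intro2 _ _ xi (conj LFxi cxi) erefl).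
  have h2 := @sum_ge _ _ _ P G Gam (pi xi) Hp.
  by apply: filterS2 h1 h2 => x; exact: le_trans.
- move=> Y' mY' HY'; apply: Kmax => // f [xi [LFxi cxi] ->].
  have HH : {ae P, forall x, forall q, pi xi x <= ratr q -> (Y' x <= (ratr q)%:E)%E}.
    apply: ae_rat => q.
    pose A := [set x | pi xi x <= ratr q].
    have GA : G A.
      have [mG _] := hLG.
      have := mG _ (piLG _ LFxi) _ (measurable_itv `]-oo, ratr q]).
      congr G; apply/seteqP; split => x; by rewrite /= in_itv /=.
    have GAc : G (~` A).
      by have [[_ hc _] _] := hG; rewrite -setTD; exact: hc.
    have Hp : G_partition G [:: A; ~` A].
      split.
      - by move=> [|[|i]].
      - by move=> [|[|i]] [|[|j]] //= _ _ _; rewrite ?setICr ?setICl.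
      - by move=> x; have [Ax|nAx] := pselect (A x); [exists 0%N | exists 1%N].
    have [_ KGlb _] := hKG _ Hp.
    have h1 := HY' (KG [:: A; ~` A]) (ex_intro2 _ _ _ Hp erefl).
    have h2 := KGlb (pi_Gamma P pi [:: A; ~` A] xi)
                 (ex_intro2 _ _ xi (conj LFxi cxi) erefl).
    apply: filterS2 h1 h2 => x l1 l2 Ax.
    apply: le_trans l1 (le_trans l2 _).
    rewrite /pi_Gamma (@sum_on _ _ _ G _ _ x 0 Hp) //=.
    apply: ereal_inf_lbound => /=.
    by apply: (@aeW _ _ _ P (fun y => A y -> ((pi xi y)%:E <= (ratr q)%:E)%E)) => y; rewrite lee_fin.
  apply: filterS HH => x Hx /=.
  rewrite leNgt; apply/negP => /dens2 [q [l1 l2]].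
  by have := Hx q (ltW l1); rewrite leNgt l2.
Qed.
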